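(* Consider the unit-cost Correlated Pandora's Problem (all $c_i=1$). For any $k\le 4$ and any scenario $v$, the objective of $k$-Delayed Activation with Discrete-Time Poisson Rounding is at most $\alpha_{i^*}+(k+1)v_{i^*}$, where $i^*=\arg\min_{i\in[n]}\{\alpha_i+kv_i\}$.
   Context: Boxes $[n]$ with unit opening costs and volumes $v_i\ge 0$ (scenario $v$). Let $x_i(t)\ge 0$ ($i,t\in[n]$) satisfy $\sum_i x_i(t)\le 1$ for all $t$, and $\bar x_i(t)=\frac1t\sum_{t'=1}^{\min\{t,n\}}x_i(t')$. Discrete-Time Poisson Rounding: independently at each step $\tau=1,2,\dots$, sample box $i$ with probability $\bar x_i(\lceil\tau/2\rceil)$ (no box with the remaining probability); $\alpha_i$ is the first step at which box $i$ is sampled; all $\alpha_i$ are sampled in advance. $k$-Delayed Activation: open the boxes one per unit time step in ascending order of $\alpha_i$; stop after time step $\min_i(\alpha_i+\lfloor kv_i\rfloor)$ (or when all boxes are opened) and take the opened box of minimum volume; the objective is the number of boxes opened plus the taken volume. *)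

(* Defs.v *)
From HB Require Import structures.
From mathcomp Require Import all_boot all_order all_algebra.
From mathcomp Require Import reals.
Set Implicit Arguments. Unset Strict Implicit. Unset Printing Implicit Defensive.
Import Order.TTheory GRing.Theory Num.Theory.
Local Open Scope ring_scope.

Section Defs.
Variables (R : realType) (n : nat).

(* x_i(t) is only meaningful for t in [n] = {1,..,n}; other values are ignored.
   xbar_i(t) = (1/t) * sum_{t'=1}^{min(t,n)} x_i(t'). *)
Definition xbar (x : 'I_n -> nat -> R) (i : 'I_n) (t : nat) : R :=
  (t%:R)^-1 * \sum_(1 <= t' < (minn t n).+1) x i t'.

Definition ceil_half (tau : nat) : nat := (tau.+1)./2.

(* s tau = Some i : box i is sampled at step tau (tau >= 1); None : no box.
   first_sample s i a : a is the first step at which box i is sampled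
   (a = None encodes alpha_i = +infinity, i.e. never sampled). *)
Definition first_sample (s : nat -> option 'I_n) (i : 'I_n) (a : option nat) : Prop :=
  match a with
  | Some t => [/\ (1 <= t)%N, s t = Some i &
                 forall tau, (1 <= tau)%N -> (tau < t)%N -> s tau <> Some i]
  | None => forall tau, (1 <= tau)%N -> s tau <> Some i
  end.

Definition ale (a b : option nat) : bool :=
  match a, b with
  | Some x, Some y => (x <= y)%N
  | _, None => true
  | None, Some _ => false
  end.

Definition omin (a b : option nat) : option nat :=
  match a, b with
  | Some x, Some y => Some (minn x y)
  | Some x, None => Some x
  | None, b => b
  end.

(* stopping time T = min_i (alpha_i + floor(k v_i)); None = +infinity.
   floor(k v_i) is Num.truncn (k * v i) (equal to the floor since k v_i >= 0). *)
Definition stop_time (alpha : 'I_n -> option nat) (v : 'I_n -> R) (k : R)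
  : option nat :=
  foldr (fun i acc => omin (omap (fun a => a + Num.truncn (k * v i))%N (alpha i)) acc)
        None (enum 'I_n).

Definition num_opened (alpha : 'I_n -> option nat) (v : 'I_n -> R) (k : R) : nat :=
  match stop_time alpha v k with
  | Some t => minn t n
  | None => n
  end.

Definition seq_min_vol (v : 'I_n -> R) (s : seq 'I_n) : R :=
  match s with
  | [::] => 0
  | j :: r => foldr (fun j acc => Num.min (v j) acc) (v j) r
  end.

Definition kDA_objective (alpha : 'I_n -> option nat) (sigma : seq 'I_n)
  (v : 'I_n -> R) (k : R) : R :=
  let m := num_opened alpha v k in
  m%:R + seq_min_vol v (take m sigma).

End Defs.

(* Main.v *)
Require Import Defs.
From HB Require Import structures.
From mathcomp Require Import all_boot all_order all_algebra.
From mathcomp Require Import reals.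
Import Order.TTheory GRing.Theory Num.Theory.
Local Open Scope ring_scope.

Section H.
Variables (R : realType) (n : nat).
Implicit Types (alpha : 'I_n -> option nat) (v : 'I_n -> R) (k : R).

Definition F alpha v k := (fun i acc => omin (omap (fun a => a + Num.truncn (k * v i))%N (alpha i)) acc).

Lemma fold_upper alpha v k (r : seq 'I_n) j b : j \in r -> alpha j = Some b ->
  exists t, foldr (F alpha v k) None r = Some t /\ (t <= b + Num.truncn (k * v j))%N.
Proof.
elim: r => [//|i r IH]; rewrite inE => /orP [/eqP <- | jr] aj; rewrite /= {1}/F.
  rewrite aj /=; case: (foldr _ _ _) => [t|]; eexists; split; try reflexivity.
    exact: geq_minl.
  done.
have [t [-> le]] := IH jr aj; case: (alpha i) => [c|] /=; eexists; split; try reflexivity => //.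
- by rewrite geq_min le orbT.
- done.
Qed.

Lemma fold_lower alpha v k (r : seq 'I_n) L t :
  (forall j b, alpha j = Some b -> (L <= b + Num.truncn (k * v j))%N) ->
  foldr (F alpha v k) None r = Some t -> (L <= t)%N.
Proof.
move=> H; elim: r t => [//|i r IH] t; rewrite /= {1}/F.
case E: (alpha i) => [c|] /=; case E2: (foldr _ _ _) => [u|] //= [<-].
- by rewrite leq_min (H _ _ E) (IH u E2).
- exact: H E.
- exact: IH.
Qed.

Lemma stop_time_eq alpha v k : stop_time alpha v k = foldr (F alpha v k) None (enum 'I_n).
Proof. by []. Qed.

Lemma minvol_le v (s : seq 'I_n) j : j \in s -> seq_min_vol v s <= v j.
Proof.
case: s => [//|j0 r] /=.
suff: forall j, j \in j0 :: r -> foldr (fun j acc => Num.min (v j) acc) (v j0) r <= v j by apply.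
elim: r => [|i r IH] j'; first by rewrite inE => /eqP ->.
rewrite /= !inE => /or3P [/eqP -> | /eqP -> | jr].
- rewrite ge_min; apply/orP; right; apply: IH; exact: mem_head.
- by rewrite ge_min lexx.
- rewrite ge_min; apply/orP; right; apply: IH; by rewrite inE jr orbT.
Qed.

End H.

Lemma ale_trans (n : nat) (alpha : 'I_n -> option nat) :
  transitive (fun i j => ale (alpha i) (alpha j)).
Proof.
move=> j i l; rewrite /ale.
case: (alpha i) => [x|]; case: (alpha j) => [y|]; case: (alpha l) => [z|] //.
exact: leq_trans.
Qed.

Theorem lemmaA2 (R : realType) (n : nat) (x : 'I_n -> nat -> R) (v : 'I_n -> R)
  (k : R) (s : nat -> option 'I_n) (alpha : 'I_n -> option nat)
  (sigma : seq 'I_n) (istar : 'I_n) (a : nat) :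
  (* LP solution x_i(t), i,t in [n] *)
  (forall i t, (1 <= t <= n)%N -> 0 <= x i t) ->
  (forall t, (1 <= t <= n)%N -> \sum_(i < n) x i t <= 1) ->
  (* scenario v, parameter k <= 4 *)
  (forall i, 0 <= v i) -> 0 <= k -> k <= 4 ->
  (* Discrete-Time Poisson Rounding: at step tau only boxes with positive
     sampling probability xbar_i(ceil(tau/2)) can be sampled *)
  (forall tau i, (1 <= tau)%N -> s tau = Some i -> 0 < xbar x i (ceil_half tau)) ->
  (forall i, first_sample s i (alpha i)) ->
  (* sigma : the boxes in ascending order of alpha *)
  perm_eq sigma (enum 'I_n) ->
  sorted (fun i j => ale (alpha i) (alpha j)) sigma ->
  (* istar = argmin_i (alpha_i + k v_i) *)
  alpha istar = Some a ->
  (forall j b, alpha j = Some b -> a%:R + k * v istar <= b%:R + k * v j) ->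
  kDA_objective alpha sigma v k <= a%:R + (k + 1) * v istar.
Proof.
move=> _ _ hv hk0 _ _ hfirst hperm hsort ha hmin.
have dist : forall i j t, alpha i = Some t -> alpha j = Some t -> i = j.
  move=> i j t ai aj; have := hfirst i; have := hfirst j; rewrite ai aj /=.
  by case=> _ hj _ [_ hi _]; move: hi; rewrite hj => -[].
have ge1 : forall i t, alpha i = Some t -> (1 <= t)%N.
  by move=> i t ai; have := hfirst i; rewrite ai; case.
have [t [Ht Hup]] := @fold_upper R n alpha v k _ istar a (mem_enum _ istar) ha.
have Hlow : (a <= t)%N.
  apply: (@fold_lower R n alpha v k (enum 'I_n) a t _ Ht) => j b aj.
  have h1 := hmin j b aj.
  have h2 := truncnS_gt (k * v j).
  have h3 : 0 <= k * v istar by apply: mulr_ge0.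
  rewrite -ltnS -(ltr_nat R) -natr1 natrD.
  apply: (le_lt_trans (y := a%:R + k * v istar)); first by rewrite lerDl.
  apply: (le_lt_trans h1). rewrite -addrA ltrD2l. by rewrite natr1.
have istar_in : istar \in sigma by rewrite (perm_mem hperm) mem_enum.
have sz : size sigma = n by rewrite (perm_size hperm) size_enum_ord.
have usig : uniq sigma by rewrite (perm_uniq hperm) enum_uniq.
set p := index istar sigma.
have plt : (p < size sigma)%N by rewrite index_mem.
have Hp : (p < a)%N.
  have dec : sigma = take p sigma ++ istar :: drop p.+1 sigma.
    by rewrite -{1}(cat_take_drop p sigma) (drop_nth istar plt) nth_index.
  have pw := hsort; rewrite sorted_pairwise in pw; last exact: ale_trans.
  rewrite dec pairwise_cat in pw; case/and3P: pw => /allrelP ar _ _.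
  have key : forall j, j \in take p sigma -> exists2 b, alpha j = Some b & (1 <= b < a)%N.
    move=> j jin; have := ar j istar jin (mem_head _ _); rewrite ha /ale.
    case E: (alpha j) => [b|] // bla; exists b => //; rewrite (ge1 _ _ E) /=.
    rewrite ltn_neqAle bla andbT; apply/negP => /eqP eb; subst b.
    have ej := dist _ _ _ E ha; subst j.
    by move: jin; rewrite (in_take _ istar_in) ltnn.
  pose g j := odflt 0%N (alpha j).
  have U : uniq (map g (take p sigma)).
    rewrite map_inj_in_uniq ?take_uniq // => i j iin jin.
    have [bi Ei _] := key i iin; have [bj Ej _] := key j jin.
    rewrite /g Ei Ej /= => ebij; subst bj; exact: dist Ei Ej.
  have S : {subset map g (take p sigma) <= iota 1 a.-1}.
    move=> y /mapP [j jin ->]; have [b Eb /andP [b1 ba]] := key j jin.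
    rewrite /g Eb /= mem_iota b1 /=; case: a ba {hmin ha Hlow Hup key U} => // a' /=.
  have := uniq_leq_size U S.
  rewrite size_map size_iota (size_takel (ltnW plt)) => hle.
  have a1 := ge1 _ _ ha.
  by rewrite -(prednK a1) ltnS.
rewrite /kDA_objective /num_opened stop_time_eq Ht.
have inm : istar \in take (minn t n) sigma.
  have pn : (p < n)%N by move: plt; rewrite sz.
  by rewrite (in_take _ istar_in) leq_min (leq_trans Hp Hlow) pn.
have hvol := @minvol_le R n v _ _ inm.
have hm : (minn t n)%:R <= a%:R + k * v istar :> R.
  apply: (le_trans (y := t%:R)); first by rewrite ler_nat geq_minl.
  apply: (le_trans (y := (a + Num.truncn (k * v istar))%:R)); first by rewrite ler_nat.
  rewrite natrD lerD2l truncn_le; exact: mulr_ge0.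
rewrite mulrDl mul1r addrA; exact: lerD.
Qed.
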